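(* Let $a\in\mathcal{T}_n\setminus\mathcal{S}_n$ with $\operatorname{rank}(a)=k$ and kernel of type $\lambda$, and let $G\le\mathcal{S}_n$. Then $(a,G)$ is an $\mathcal{S}_n$-pair if and only if $G$ is $k$-homogeneous and $G$ is $\lambda$-homogeneous.
   Context: $\Omega=\{1,\ldots,n\}$, $\mathcal{T}_n$ is the monoid of all maps $\Omega\to\Omega$, $\mathcal{S}_n$ the symmetric group. $\operatorname{rank}(a)=|\Omega a|$; the kernel of $a$ is the partition of $\Omega$ into the classes of $\{(x,y):xa=ya\}$, and its type is the non-increasing list of class sizes. $(a,G)$ is an $\mathcal{S}_n$-pair if $\langle a,G\rangle\setminus G=\langle a,\mathcal{S}_n\rangle\setminus\mathcal{S}_n$ (this notion is defined for non-invertible $a$). $G$ is $k$-homogeneous if transitive on $k$-subsets of $\Omega$. For a partition $\lambda$ of $n$, $G$ is $\lambda$-homogeneous if for any two ordered partitions $(A_1,A_2,\ldots)$, $(B_1,B_2,\ldots)$ of $\Omega$ with $|A_i|=|B_i|=\lambda_i$ there is $g\in G$ mapping the set of parts $\{A_1,A_2,\ldots\}$ onto $\{B_1,B_2,\ldots\}$. *)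

(* Defs.v *)
From mathcomp Require Import all_boot all_fingroup.
Set Implicit Arguments. Unset Strict Implicit. Unset Printing Implicit Defensive.

(* Omega = 'I_n ; T_n = {ffun 'I_n -> 'I_n} ; S_n = {perm 'I_n}.
   Maps act on the right: x (f g) = (x f) g. *)

Definition tmap n := {ffun 'I_n -> 'I_n}.

Definition tmul n (f g : tmap n) : tmap n := [ffun x => g (f x)].

Definition perm_tmap n (p : {perm 'I_n}) : tmap n := [ffun x => p x].

Definition in_perms n (G : {set {perm 'I_n}}) (f : tmap n) : Prop :=
  exists2 g, g \in G & f = perm_tmap g.

Inductive sgen n (a : tmap n) (G : {set {perm 'I_n}}) : tmap n -> Prop :=
| sgen_a : sgen a G a
| sgen_G g : g \in G -> sgen a G (perm_tmap g)
| sgen_mul f h : sgen a G f -> sgen a G h -> sgen a G (tmul f h).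

Definition Sn_pair n (a : tmap n) (G : {set {perm 'I_n}}) : Prop :=
  forall f : tmap n,
    (sgen a G f /\ ~ in_perms G f) <->
    (sgen a [set: {perm 'I_n}] f /\ ~ in_perms [set: {perm 'I_n}] f).

Definition rank n (a : tmap n) : nat := #|[set a x | x : 'I_n]|.

Definition kernel n (a : tmap n) : {set {set 'I_n}} :=
  [set [set y | a y == a x] | x : 'I_n].
Definition kernel_type n (a : tmap n) : seq nat :=
  sort geq [seq #|A| | A : {set 'I_n} <- enum (kernel a)].

Definition k_homogeneous n (G : {set {perm 'I_n}}) (k : nat) : Prop :=
  forall A B : {set 'I_n}, #|A| = k -> #|B| = k ->
    exists2 g, g \in G & [set g x | x in A] = B.

Definition ordered_partition_of_type n (lam : seq nat) (As : seq {set 'I_n}) : Prop :=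
  [/\ size As = size lam,
      forall i, i < size As -> #|nth set0 As i| = nth 0 lam i,
      forall i j, i < size As -> j < size As -> i != j ->
        [disjoint nth set0 As i & nth set0 As j] &
      forall x : 'I_n, exists2 A, A \in As & x \in A].

Definition lambda_homogeneous n (G : {set {perm 'I_n}}) (lam : seq nat) : Prop :=
  forall As Bs : seq {set 'I_n},
    ordered_partition_of_type lam As -> ordered_partition_of_type lam Bs ->
    exists2 g, g \in G &
      [set [set g x | x in A] | A : {set 'I_n} in As] = [set B : {set 'I_n} in Bs].

(* Main.v *)
Require Import Defs.
From mathcomp Require Import all_boot all_fingroup.
Set Implicit Arguments. Unset Strict Implicit. Unset Printing Implicit Defensive.

Lemma tmulE n (f g : tmap n) x : tmul f g x = g (f x).
Proof. by rewrite /tmul ffunE. Qed.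
Lemma perm_tmapE n (p : {perm 'I_n}) x : perm_tmap p x = p x.
Proof. by rewrite /perm_tmap ffunE. Qed.

Lemma bij_into (T : finType) (X Y : {set T}) : #|X| <= #|Y| ->
  {in X, forall x, nth x (enum Y) (index x (enum X)) \in Y} /\
  {in X &, injective (fun x => nth x (enum Y) (index x (enum X)))}.
Proof.
move=> XY.
have lt x : x \in X -> index x (enum X) < size (enum Y).
  by move=> xX; rewrite -cardE; apply: leq_trans XY; rewrite cardE index_mem mem_enum.
split.
  by move=> x xX; rewrite -mem_enum mem_nth // lt.
move=> x y xX yX /= E.
have := lt _ xX; have := lt _ yX => ly lx.
have : nth x (enum Y) (index x (enum X)) == nth x (enum Y) (index y (enum X)).
  by rewrite E (set_nth_default x).
rewrite nth_uniq ?enum_uniq // => /eqP Ei.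
have xe : x \in enum X by rewrite mem_enum.
have ye : y \in enum X by rewrite mem_enum.
by rewrite -(nth_index x xe) Ei nth_index.
Qed.
Lemma ext_perm (T : finType) (D : {set T}) (f : T -> T) :
  {in D &, injective f} -> exists p : {perm T}, {in D, forall x, p x = f x}.
Proof.
move=> injf.
have cEF : #|~: D| <= #|~: (f @: D)|.
  have := cardsC D; have := cardsC (f @: D); rewrite card_in_imset // => <-.
  by move/eqP; rewrite eqn_add2l => /eqP ->.
have [Fin Finj] := bij_into cEF.
pose q x := if x \in D then f x else nth x (enum (~: (f @: D))) (index x (enum (~: D))).
have qinj : injective q.
  move=> x y; rewrite /q; case: ifP => xD; case: ifP => yD.
  - by apply: injf.
  - move=> fxhy. have : nth y (enum (~: (f @: D))) (index y (enum (~: D))) \in ~: (f @: D).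
      by apply: Fin; rewrite inE yD.
    by rewrite -fxhy inE imset_f.
  - move=> fxhy. have : nth x (enum (~: (f @: D))) (index x (enum (~: D))) \in ~: (f @: D).
      by apply: Fin; rewrite inE xD.
    by rewrite fxhy inE imset_f.
  - by apply: Finj; rewrite inE ?xD ?yD.
by exists (perm qinj) => x xD; rewrite permE /q xD.
Qed.

Lemma set_bij (T : finType) (X Y : {set T}) : #|X| = #|Y| ->
  exists p : {perm T}, [set p x | x in X] = Y.
Proof.
move=> XY.
have [Fin Finj] := bij_into (eq_leq XY).
have [p Hp] := ext_perm Finj.
exists p; apply/eqP; rewrite eqEcard; apply/andP; split.
  by apply/subsetP => _ /imsetP [x xX ->]; rewrite Hp // Fin.
rewrite card_in_imset -?XY //; by move=> x y _ _; apply: perm_inj.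
Qed.
Lemma disjP (T : finType) (A B : {set T}) :
  (forall x, x \in A -> x \in B -> False) -> [disjoint A & B].
Proof.
move=> H; rewrite disjoint_subset; apply/subsetP => z zA; rewrite inE.
by apply/negP => zB; exact: H zA zB.
Qed.

Definition Ks n (a : tmap n) : seq {set 'I_n} :=
  sort (relpre (fun A : {set 'I_n} => #|A|) geq) (enum (kernel a)).

Definition kcl n (a : tmap n) (x : 'I_n) : {set 'I_n} := [set y | a y == a x].

Lemma kclP n (a : tmap n) x y : (y \in kcl a x) = (a y == a x).
Proof. by rewrite inE. Qed.

Lemma mem_Ks n (a : tmap n) A : (A \in Ks a) = (A \in kernel a).
Proof. by rewrite mem_sort mem_enum. Qed.

Lemma kcl_Ks n (a : tmap n) x : kcl a x \in Ks a.
Proof. by rewrite mem_Ks; apply/imsetP; exists x. Qed.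

Lemma kernel_cl n (a : tmap n) A x : A \in kernel a -> x \in A -> A = kcl a x.
Proof.
case/imsetP => z _ -> ; rewrite inE => /eqP E.
by apply/setP => y; rewrite !inE E.
Qed.

Lemma kernel_type_Ks n (a : tmap n) :
  kernel_type a = [seq #|A| | A : {set 'I_n} <- Ks a].
Proof. by rewrite /kernel_type sort_map. Qed.

Lemma Ks_part n (a : tmap n) : ordered_partition_of_type (kernel_type a) (Ks a).
Proof.
rewrite kernel_type_Ks; split.
- by rewrite size_map.
- by move=> i iS; rewrite (nth_map set0).
- move=> i j iS jS ij.
  have U : uniq (Ks a) by rewrite sort_uniq enum_uniq.
  have Ki : nth set0 (Ks a) i \in kernel a by rewrite -mem_Ks mem_nth.
  have Kj : nth set0 (Ks a) j \in kernel a by rewrite -mem_Ks mem_nth.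
  apply: disjP => z zi zj.
  have : nth set0 (Ks a) i == nth set0 (Ks a) j.
    by rewrite (kernel_cl Ki zi) (kernel_cl Kj zj).
  by rewrite nth_uniq // (negbTE ij).
- move=> x; exists (kcl a x); first exact: kcl_Ks.
  by rewrite kclP.
Qed.
Definition LeftP n (a : tmap n) (G : {set {perm 'I_n}}) (f : tmap n) :=
  exists2 g, g \in G & forall u v, a (g u) = a (g v) -> f u = f v.
Definition RightP n (a : tmap n) (G : {set {perm 'I_n}}) (f : tmap n) :=
  exists2 g, g \in G & forall u, exists y, f u = g (a y).

Lemma perm_tmapM n (p q : {perm 'I_n}) :
  tmul (perm_tmap p) (perm_tmap q) = perm_tmap (p * q)%g.
Proof. by apply/ffunP => x; rewrite tmulE !perm_tmapE permM. Qed.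

Lemma tmulA n (f g h : tmap n) : tmul f (tmul g h) = tmul (tmul f g) h.
Proof. by apply/ffunP => x; rewrite !tmulE. Qed.

Lemma perm_tmap1 n (f : tmap n) : tmul (perm_tmap 1%g) f = f.
Proof. by apply/ffunP => x; rewrite tmulE perm_tmapE perm1. Qed.
Lemma perm_tmap1r n (f : tmap n) : tmul f (perm_tmap 1%g) = f.
Proof. by apply/ffunP => x; rewrite tmulE perm_tmapE perm1. Qed.

Lemma sgen_struct n (a : tmap n) (G : {group {perm 'I_n}}) f :
  sgen a G f -> in_perms G f \/ (LeftP a G f /\ RightP a G f).
Proof.
elim=> [|g gG|f1 h _ IH1 _ IH2].
- right; split; exists 1%g => //.
  + by move=> u v; rewrite !perm1.
  + by move=> u; exists u; rewrite perm1.
- by left; exists g.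
- case: IH1 => [[p pG ->]|[[g1 g1G L1] [g2 g2G R1]]];
  case: IH2 => [[q qG ->]|[[h1 h1G L2] [h2 h2G R2]]].
  + by left; exists (p * q)%g; rewrite ?groupM // perm_tmapM.
  + right; split.
      exists (p * h1)%g; first by rewrite groupM.
      by move=> u v; rewrite !permM !tmulE !perm_tmapE => /L2.
    exists h2 => // u; have [y Hy] := R2 (p u).
    by exists y; rewrite tmulE perm_tmapE.
  + right; split.
      exists g1 => // u v /L1; rewrite !tmulE => ->.
      done.
    exists (g2 * q)%g; first by rewrite groupM.
    move=> u; have [y Hy] := R1 u.
    by exists y; rewrite tmulE perm_tmapE Hy permM.
  + right; split.
      by exists g1 => // u v /L1; rewrite !tmulE => ->.
    exists h2 => // u; have [y Hy] := R2 (f1 u).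
    by exists y; rewrite tmulE.
Qed.

Lemma sgen_mono n (a : tmap n) (G H : {set {perm 'I_n}}) f :
  G \subset H -> sgen a G f -> sgen a H f.
Proof.
move=> GH; elim=> [|g gG|f1 h _ IH1 _ IH2].
- exact: sgen_a.
- by apply: sgen_G; apply: (subsetP GH).
- exact: sgen_mul.
Qed.

Lemma not_perm_noninj n (a : tmap n) :
  ~ in_perms [set: {perm 'I_n}] a -> exists u v, u != v /\ a u = a v.
Proof.
move=> np.
case: (boolP [exists u, exists v, (u != v) && (a u == a v)]).
  by case/existsP => u /existsP [v /andP [uv /eqP E]]; exists u, v.
move=> H; exfalso; apply: np.
have ainj : injective a.
  move=> u v E; apply/eqP; apply/negPn/negP => uv.
  move/negP: H; apply; apply/existsP; exists u; apply/existsP; exists v.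
  by rewrite uv E eqxx.
exists (perm ainj); first by rewrite inE.
by apply/ffunP => x; rewrite perm_tmapE permE.
Qed.

Lemma left_not_perm n (a : tmap n) (G H : {set {perm 'I_n}}) f :
  ~ in_perms [set: {perm 'I_n}] a -> LeftP a G f -> ~ in_perms H f.
Proof.
move=> np [g _ L] [p _ fp].
have [u [v [uv E]]] := not_perm_noninj np.
have : f (g^-1 u)%g = f (g^-1 v)%g by apply: L; rewrite !permKV.
rewrite fp !perm_tmapE => /perm_inj /perm_inj E2.
by rewrite E2 eqxx in uv.
Qed.
Lemma ker_eq n (a : tmap n) (g s : {perm 'I_n}) :
  (forall u v, a (g u) = a (g v) -> a (s u) = a (s v)) ->
  forall u v, a (s u) = a (s v) -> a (g u) = a (g v).
Proof.
move=> H.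
pose phi z := a (s (g^-1 (odflt z [pick w | a w == z])))%g.
have phiE w : phi (a w) = a (s (g^-1 w))%g.
  rewrite /phi; case: pickP => [w' /eqP E|no]; last by have := no w; rewrite eqxx.
  by apply: H; rewrite !permKV.
set IA := [set a x | x : 'I_n].
have sub : IA \subset phi @: IA.
  apply/subsetP => _ /imsetP [x _ ->].
  apply/imsetP; exists (a (g (s^-1 x)))%g; first by rewrite imset_f.
  by rewrite phiE permK permKV.
have inj : {in IA &, injective phi}.
  apply/imset_injP; rewrite eqn_leq leq_imset_card /=.
  exact: subset_leq_card.
move=> u v E.
apply: inj; rewrite ?imset_f // !phiE !permK //.
Qed.
Lemma opt_idx n (lam : seq nat) (As : seq {set 'I_n}) x :
  ordered_partition_of_type lam As ->
  let i := find (fun A : {set 'I_n} => x \in A) As in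
  i < size As /\ x \in nth set0 As i /\
  forall j, j < size As -> x \in nth set0 As j -> j = i.
Proof.
case=> _ _ dis cov /=.
have hs : has (fun A : {set 'I_n} => x \in A) As.
  by have [A AA xA] := cov x; apply/hasP; exists A.
have lt : find (fun A : {set 'I_n} => x \in A) As < size As by rewrite -has_find.
have xin : x \in nth set0 As (find (fun A : {set 'I_n} => x \in A) As).
  exact: (nth_find set0 hs).
split => //; split => // j jS xj.
apply/eqP; apply/negPn/negP => ne.
by have := disjointFr (dis _ _ jS lt ne) xj; rewrite xin.
Qed.

Lemma block_perm n (lam : seq nat) (As Bs : seq {set 'I_n}) :
  ordered_partition_of_type lam As -> ordered_partition_of_type lam Bs ->
  exists p : {perm 'I_n}, forall i, i < size As ->
    [set p x | x in nth set0 As i] = nth set0 Bs i.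
Proof.
move=> PA PB.
have PA' := PA; have PB' := PB.
case: PA' => sA cA dA _; case: PB' => sB cB dB _.
pose idx x := find (fun A : {set 'I_n} => x \in A) As.
pose f x := nth x (enum (nth set0 Bs (idx x))) (index x (enum (nth set0 As (idx x)))).
have cardi i : i < size As -> #|nth set0 As i| <= #|nth set0 Bs i|.
  by move=> iS; rewrite cA // cB // sB -sA.
have fin x : f x \in nth set0 Bs (idx x).
  have [lt [xin _]] := opt_idx x PA.
  by have [H _] := bij_into (cardi _ lt); apply: H.
have finj : injective f.
  move=> x y E.
  have [ltx [xin ux]] := opt_idx x PA; have [lty [yin uy]] := opt_idx y PA.
  have Eidx : idx x = idx y.
    apply/eqP; apply/negPn/negP => ne.
    have ltx' : idx x < size Bs by rewrite sB -sA.
    have lty' : idx y < size Bs by rewrite sB -sA.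
    by have := disjointFr (dB _ _ ltx' lty' ne) (fin x); rewrite E fin.
  have [_ H] := bij_into (cardi _ ltx).
  have Eidx' := Eidx; rewrite /idx in Eidx'.
  apply: H; first exact: xin.
    by rewrite Eidx'.
  by move: E; rewrite /f /idx -Eidx'.
exists (perm finj) => i iS.
apply/eqP; rewrite eqEcard; apply/andP; split.
  apply/subsetP => _ /imsetP [x xA ->]; rewrite permE.
  have [_ [_ ux]] := opt_idx x PA.
  by rewrite (ux _ iS xA); apply: fin.
rewrite card_in_imset; last by move=> x y _ _; apply: perm_inj.
by rewrite cA // cB // sB -sA.
Qed.
Lemma sall_nonperm n (a : tmap n) (s t : {perm 'I_n}) :
  ~ in_perms [set: {perm 'I_n}] a ->
  sgen a [set: {perm 'I_n}] (tmul (tmul (perm_tmap s) a) (perm_tmap t)) /\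
  ~ in_perms [set: {perm 'I_n}] (tmul (tmul (perm_tmap s) a) (perm_tmap t)).
Proof.
move=> np; split.
  by apply: sgen_mul; [apply: sgen_mul; [apply: sgen_G; rewrite inE|apply: sgen_a]|apply: sgen_G; rewrite inE].
apply: (left_not_perm (G := [set: {perm 'I_n}]) np).
exists s; first by rewrite inE.
by move=> u v E; rewrite !tmulE !perm_tmapE E.
Qed.

Lemma pair_S n (a : tmap n) (G : {group {perm 'I_n}}) (s t : {perm 'I_n}) :
  ~ in_perms [set: {perm 'I_n}] a -> Sn_pair a G ->
  LeftP a G (tmul (tmul (perm_tmap s) a) (perm_tmap t)) /\
  RightP a G (tmul (tmul (perm_tmap s) a) (perm_tmap t)).
Proof.
move=> np sp.
have [H1 H2] := (sp (tmul (tmul (perm_tmap s) a) (perm_tmap t))).2 (sall_nonperm s t np).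
by case: (sgen_struct H1).
Qed.

Lemma pair_kh n (a : tmap n) (G : {group {perm 'I_n}}) :
  ~ in_perms [set: {perm 'I_n}] a -> Sn_pair a G -> k_homogeneous G (rank a).
Proof.
move=> np sp.
set IA := [set a x | x : 'I_n].
have step (X : {set 'I_n}) : #|X| = rank a -> exists2 g, g \in G & [set g x | x in IA] = X.
  move=> cX.
  have [t Ht] := set_bij (esym cX).
  have [_ [g gG R]] := pair_S 1%g t np sp.
  exists g => //; apply/eqP; rewrite eq_sym eqEcard; apply/andP; split.
    apply/subsetP => w; rewrite -Ht => /imsetP [w1 /imsetP [u _ ->] ->].
    have [y Hy] := R u; move: Hy; rewrite !tmulE !perm_tmapE perm1 => ->.
    by rewrite imset_f // imset_f.
  by rewrite card_in_imset ?cX //; move=> x y _ _; apply: perm_inj.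
move=> A B cA cB.
have [gA gAG HA] := step _ cA; have [gB gBG HB] := step _ cB.
exists (gA^-1 * gB)%g; first by rewrite groupM ?groupV.
rewrite -HA -HB -imset_comp; apply: eq_imset => x /=.
by rewrite permM permK.
Qed.

Lemma pair_lh_step n (a : tmap n) (G : {group {perm 'I_n}}) As :
  ~ in_perms [set: {perm 'I_n}] a -> Sn_pair a G ->
  ordered_partition_of_type (kernel_type a) As ->
  exists2 g, g \in G & [set [set g x | x in X] | X : {set 'I_n} in As] = kernel a.
Proof.
move=> np sp PA.
have [sA HsA] := block_perm PA (Ks_part a).
have [[gA gAG L] _] := pair_S sA 1%g np sp.
have L' : forall u v, a (gA u) = a (gA v) -> a (sA u) = a (sA v).
  by move=> u v /L; rewrite !tmulE !perm_tmapE !perm1.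
have Keq u v : (a (sA u) == a (sA v)) = (a (gA u) == a (gA v)).
  by apply/eqP/eqP; [apply: ker_eq|apply: L'].
have cl X x : X \in As -> x \in X -> [set gA y | y in X] = kcl a (gA x).
  move=> XA xX.
  have PA' := PA; case: PA' => sz _ _ _.
  have iS : index X As < size As by rewrite index_mem.
  have EX : nth set0 As (index X As) = X by rewrite nth_index.
  have Ki : nth set0 (Ks a) (index X As) \in kernel a.
    by have [szK _ _ _] := Ks_part a; rewrite -mem_Ks mem_nth // szK -sz.
  have sxK : sA x \in nth set0 (Ks a) (index X As) by rewrite -HsA // EX imset_f.
  apply/setP => w.
  rewrite -[w in LHS](permKV gA) mem_imset; last exact: perm_inj.
  rewrite -EX -(mem_imset _ _ (@perm_inj _ sA)) HsA // (kernel_cl Ki sxK) !kclP Keq.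
  by rewrite permKV.
exists gA => //; apply/setP => K; apply/imsetP/idP.
  case=> X XA ->.
  have PA' := PA; case: PA' => sz cs _ _.
  have : 0 < #|X|.
    have iS : index X As < size As by rewrite index_mem.
    have [szK _ _ _] := Ks_part a.
    rewrite -(nth_index set0 XA) cs // kernel_type_Ks (nth_map set0); last by rewrite szK -sz.
    have : nth set0 (Ks a) (index X As) \in kernel a by rewrite -mem_Ks mem_nth // szK -sz.
    by case/imsetP => z _ ->; apply/card_gt0P; exists z; rewrite inE.
  case/card_gt0P => x xX.
  by rewrite (cl _ _ XA xX); apply/imsetP; exists (gA x).
case/imsetP => z _ ->.
have PA' := PA; case: PA' => _ _ _ cov.
have [X XA xX] := cov (gA^-1 z)%g.
exists X => //; by rewrite (cl _ _ XA xX) permKV.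
Qed.

Lemma imset_permK n (p : {perm 'I_n}) (X : {set 'I_n}) :
  [set (p^-1)%g x | x in [set p x | x in X]] = X.
Proof.
by rewrite -imset_comp -[RHS]imset_id; apply: eq_imset => x /=; exact: permK.
Qed.

Lemma pair_lh n (a : tmap n) (G : {group {perm 'I_n}}) :
  ~ in_perms [set: {perm 'I_n}] a -> Sn_pair a G ->
  lambda_homogeneous G (kernel_type a).
Proof.
move=> np sp As Bs PA PB.
have [gA gAG HA] := pair_lh_step np sp PA.
have [gB gBG HB] := pair_lh_step np sp PB.
exists (gA * gB^-1)%g; first by rewrite groupM ?groupV.
have E : [set [set (gA * gB^-1)%g x | x in X] | X : {set 'I_n} in As] =
         [set [set (gB^-1)%g x | x in K] | K : {set 'I_n} in kernel a].
  rewrite -HA -imset_comp; apply: eq_imset => X /=.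
  by rewrite -imset_comp; apply: eq_imset => x /=; rewrite permM.
rewrite E -HB; apply/setP => Y; rewrite inE.
apply/imsetP/idP.
  by case=> _ /imsetP [X XB ->] ->; rewrite imset_permK.
move=> YB; exists [set gB x | x in Y]; first by rewrite imset_f.
by rewrite imset_permK.
Qed.
Fixpoint tpow n (y : tmap n) m : tmap n :=
  match m with 0 => y | m'.+1 => tmul y (tpow y m') end.

Lemma tpow_sgen n (a : tmap n) (G : {set {perm 'I_n}}) y m :
  sgen a G y -> sgen a G (tpow y m).
Proof. by move=> Sy; elim: m => [|m IH] //=; apply: sgen_mul. Qed.

Lemma tpow_first n (y : tmap n) m u v : y u = y v -> tpow y m u = tpow y m v.
Proof. by case: m => [|m] //= E; rewrite !tmulE E. Qed.

Lemma lam_step n (a : tmap n) (G : {group {perm 'I_n}}) :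
  lambda_homogeneous G (kernel_type a) -> forall s : {perm 'I_n},
  exists2 g, g \in G & forall u v, (a (g u) == a (g v)) = (a (s u) == a (s v)).
Proof.
move=> lh s.
pose As := [seq s @^-1: K | K : {set 'I_n} <- Ks a].
have PK := Ks_part a; have PK' := PK; case: PK' => szK cK dK covK.
have PA : ordered_partition_of_type (kernel_type a) As.
  split.
  - by rewrite size_map.
  - move=> i; rewrite size_map => iS.
    by rewrite (nth_map set0) // card_preimset ?cK //; apply: perm_inj.
  - move=> i j; rewrite size_map => iS jS ij.
    rewrite !(nth_map set0) //; apply: disjP => z; rewrite !inE => zi zj.
    by have := disjointFr (dK _ _ iS jS ij) zi; rewrite zj.
  - move=> x; exists (s @^-1: kcl a (s x)).
      by apply/mapP; exists (kcl a (s x)) => //; apply: kcl_Ks.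
    by rewrite inE kclP.
have [g gG Hg] := lh As (Ks a) PA PK.
exists g => // u v.
set X := s @^-1: kcl a (s u).
have XA : X \in As by apply/mapP; exists (kcl a (s u)) => //; apply: kcl_Ks.
have : [set g x | x in X] \in [set B in Ks a] by rewrite -Hg imset_f.
rewrite inE mem_Ks => Kin.
have guX : g u \in [set g x | x in X] by rewrite imset_f // inE kclP.
have EK := kernel_cl Kin guX.
rewrite eq_sym -kclP -EK mem_imset; last exact: perm_inj.
by rewrite inE kclP eq_sym.
Qed.

Lemma E_idem n (a : tmap n) (G : {group {perm 'I_n}}) :
  k_homogeneous G (rank a) -> lambda_homogeneous G (kernel_type a) ->
  forall (s : {perm 'I_n}) (I : {set 'I_n}), #|I| = rank a ->
  {in I &, injective (fun x => a (s x))} ->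
  exists e, sgen a G e /\ forall u, e u \in I /\ a (s (e u)) = a (s u).
Proof.
move=> kh lh s I cI Iinj.
set IA := [set a x | x : 'I_n].
have T1 u : exists2 i, i \in I & a (s i) = a (s u).
  have sub : [set a (s x) | x in I] \subset IA.
    by apply/subsetP => _ /imsetP [x _ ->]; rewrite imset_f.
  have : [set a (s x) | x in I] == IA.
    by rewrite eqEcard sub card_in_imset // cI /rank /=; exact: leqnn.
  move/eqP => EI.
  have : a (s u) \in IA by rewrite imset_f.
  by rewrite -EI => /imsetP [i iI E]; exists i.
have [g gG Hg] := lam_step lh s.
have [h hG Hh] := kh IA I erefl cI.
pose y := tmul (tmul (perm_tmap g) a) (perm_tmap h).
have Sy : sgen a G y.
  by apply: sgen_mul; [apply: sgen_mul; [apply: sgen_G|apply: sgen_a]|apply: sgen_G].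
have yE x : y x = h (a (g x)) by rewrite !tmulE !perm_tmapE.
have yI x : y x \in I by rewrite yE -Hh imset_f // imset_f.
have yker u v : (y u == y v) = (a (s u) == a (s v)).
  by rewrite !yE (inj_eq (@perm_inj _ h)) Hg.
have yinj : {in I &, injective y}.
  by move=> i j iI jI /eqP; rewrite yker => /eqP; apply: Iinj.
have sub : [set y x | x in I] \subset I by apply/subsetP => _ /imsetP [x _ ->].
pose sig := perm (perm_in_inj yinj sub).
have sigE i : i \in I -> sig i = y i by move=> iI; rewrite permE /= iI.
have powE m i : i \in I -> tpow y m i = (sig ^+ m.+1)%g i.
  elim: m i => [|m IH] i iI /=; first by rewrite expg1 sigE.
  by rewrite tmulE expgS permM sigE // IH // yI.
exists (tpow y (#[sig]%g).-1); split; first exact: tpow_sgen.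
move=> u; have [i iI Ei] := T1 u.
have -> : tpow y (#[sig]%g).-1 u = i.
  rewrite (@tpow_first _ _ _ u i); last by apply/eqP; rewrite yker Ei.
  by rewrite powE // prednK ?order_gt0 // expg_order perm1.
by [].
Qed.
Lemma rank_facts n (a : tmap n) :
  ~ in_perms [set: {perm 'I_n}] a -> 0 < rank a < n.
Proof.
move=> np; have [u [v [uv E]]] := not_perm_noninj np.
apply/andP; split.
  by apply/card_gt0P; exists (a u); rewrite imset_f.
rewrite /rank ltn_neqAle; apply/andP; split.
  apply/negP => /eqP H.
  have : #|[set a x | x : 'I_n]| == #|'I_n| by rewrite card_ord H.
  move/imset_injP => inj.
  by have := inj u v isT isT E; move/eqP; rewrite (negbTE uv).
by have := leq_imset_card a 'I_n; rewrite card_ord.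
Qed.

Lemma Move n (a : tmap n) (G : {group {perm 'I_n}}) :
  ~ in_perms [set: {perm 'I_n}] a ->
  k_homogeneous G (rank a) -> lambda_homogeneous G (kernel_type a) ->
  forall (C : {set 'I_n}) x y, #|C| = (rank a).-1 -> x \notin C -> y \notin C -> x != y ->
  exists w, sgen a G w /\ (forall c, c \in C -> w c = c) /\ w x = y.
Proof.
move=> np kh lh C x y cC xC yC xy.
have /andP [k0 kn] := rank_facts np.
have [u0 [v0 [uv0 E0]]] := not_perm_noninj np.
pose r w := odflt w [pick z | a z == a w].
have rP w : a (r w) = a w.
  rewrite /r; case: pickP => [z /eqP -> //|no] //.
have r_eq w w' : a w = a w' -> r w = r w'.
  move=> E; rewrite /r E; case: pickP => [z _ //|no].
  by have := no w'; rewrite eqxx.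
pose u := r u0.
pose v := if u == u0 then v0 else u0.
have av : a v = a u by rewrite /v /u rP; case: ifP.
have vu : v != u.
  rewrite /v; case: ifP => [/eqP ->|]; first by rewrite eq_sym.
  by move/negbT; rewrite eq_sym.
pose T := [set r w | w : 'I_n].
have Tinj : {in T &, injective a}.
  by move=> _ _ /imsetP [w1 _ ->] /imsetP [w2 _ ->]; rewrite !rP => /r_eq.
have uT : u \in T by rewrite imset_f.
have cT : #|T| = rank a.
  have EAT : [set a z | z in T] = [set a x | x : 'I_n].
    apply/setP => z; apply/imsetP/imsetP => [[_ /imsetP [w _ ->] ->]|[w _ ->]].
    by exists w; rewrite ?rP.
  by exists (r w); rewrite ?rP ?imset_f.
  by rewrite -(card_in_imset Tinj) EAT.
pose W := T :\ u.
have cW : #|W| = (rank a).-1 by rewrite -cT (cardsD1 u T) uT.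
have vW : v \notin W.
  apply/negP; rewrite !inE => /andP [_ vT].
  by have := Tinj _ _ vT uT av; move/eqP; rewrite (negbTE vu).
have uW : u \notin W by rewrite !inE eqxx.
have [fCin fCinj] := bij_into (eq_leq (etrans cC (esym cW))).
pose fC c := nth c (enum W) (index c (enum C)).
pose fD z := if z == x then u else if z == y then v else fC z.
pose D := x |: (y |: C).
have cx c : c \in C -> (c == x) = false.
  by move=> cC'; apply/negP => /eqP E; rewrite -E cC' in xC.
have cy c : c \in C -> (c == y) = false.
  by move=> cC'; apply/negP => /eqP E; rewrite -E cC' in yC.
have fDC c : c \in C -> fD c = fC c by move=> cC'; rewrite /fD cx // cy.
have fDx : fD x = u by rewrite /fD eqxx.
have fDy : fD y = v by rewrite /fD eqxx eq_sym (negbTE xy).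
have fDinj : {in D &, injective fD}.
  move=> z1 z2; rewrite !inE => /orP [/eqP->|/orP [/eqP->|z1C]] /orP [/eqP->|/orP [/eqP->|z2C]] //;
  rewrite ?fDx ?fDy ?fDC // => E;
  first [ by move: E => /eqP; rewrite ?(eq_sym u v) (negbTE vu)
        | by exfalso; move: (fCin _ z2C); rewrite -/(fC z2) -E; apply/negP; first [exact: uW | exact: vW]
        | by exfalso; move: (fCin _ z1C); rewrite -/(fC z1) E; apply/negP; first [exact: uW | exact: vW]
        | exact: fCinj ].
have [s Hs] := ext_perm fDinj.
have sx : s x = u by rewrite Hs ?fDx // !inE eqxx.
have sy : s y = v by rewrite Hs ?fDy // !inE eqxx orbT.
have sC c : c \in C -> s c = fC c by move=> cC'; rewrite Hs ?fDC // !inE cC' !orbT.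
pose J := y |: C.
have cJ : #|J| = rank a by rewrite cardsU1 yC cC add1n prednK.
have WT c : c \in C -> fC c \in T by move=> cC'; have := fCin _ cC'; rewrite !inE => /andP [].
have Jinj : {in J &, injective (fun z => a (s z))}.
  move=> z1 z2; rewrite !inE => /orP [/eqP->|z1C] /orP [/eqP->|z2C] //=; rewrite ?sy ?sC //.
  - rewrite av => E; have := Tinj _ _ uT (WT _ z2C) E.
    by move=> Eu; move: (fCin _ z2C); rewrite -/(fC z2) -Eu (negbTE uW).
  - rewrite av => E; have := Tinj _ _ (WT _ z1C) uT E.
    by move=> Eu; move: (fCin _ z1C); rewrite -/(fC z1) Eu (negbTE uW).
  - by move=> E; apply: fCinj => //; apply: Tinj => //; apply: WT.
have [e [Se He]] := E_idem kh lh cJ Jinj.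
exists e; split => //; split.
  move=> c cC'; have [eJ Ee] := He c.
  by apply: Jinj => //; rewrite !inE cC' orbT.
have [eJ Ee] := He x.
apply: Jinj => //; first by rewrite !inE eqxx.
by rewrite Ee sx sy av.
Qed.
Lemma realize n (a : tmap n) (G : {group {perm 'I_n}}) :
  ~ in_perms [set: {perm 'I_n}] a ->
  k_homogeneous G (rank a) -> lambda_homogeneous G (kernel_type a) ->
  forall m (I : {set 'I_n}) (b : 'I_n -> 'I_n), #|I| = rank a ->
  {in I &, injective b} -> #|[set i in I | b i != i]| <= m ->
  exists w, sgen a G w /\ forall i, i \in I -> w i = b i.
Proof.
move=> np kh lh.
have /andP [k0 kn] := rank_facts np.
have freept (I : {set 'I_n}) : #|I| = rank a -> exists z, z \notin I.
  move=> cI; have : 0 < #|~: I|.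
    by have := cardsC I; rewrite cI card_ord => E; rewrite -(ltn_add2l (rank a)) E addn0.
  by case/card_gt0P => z; rewrite inE => zI; exists z.
have cD (I : {set 'I_n}) i : #|I| = rank a -> i \in I -> #|I :\ i| = (rank a).-1.
  by move=> cI iI; rewrite -cI (cardsD1 i I) iI.
elim=> [|m IH] I b cI binj dI.
  have fix1 i : i \in I -> b i = i.
    move=> iI; apply/eqP; apply/negPn/negP => ne.
    have : i \in [set i in I | b i != i] by rewrite inE iI ne.
    by move: dI; rewrite leqn0 => /eqP /cards0_eq ->; rewrite inE.
  have [i iI] : exists i, i \in I by apply/card_gt0P; rewrite cI.
  have [z zI] := freept I cI.
  have iD : i \notin I :\ i by rewrite !inE eqxx.
  have zD : z \notin I :\ i by rewrite !inE negb_and zI orbT.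
  have iz : i != z by apply/negP => /eqP E; rewrite -E iI in zI.
  have [m1 [S1 [C1 E1]]] := Move np kh lh (cD I i cI iI) iD zD iz.
  have zi : z != i by rewrite eq_sym.
  have [m2 [S2 [C2 E2]]] := Move np kh lh (cD I i cI iI) zD iD zi.
  exists (tmul m1 m2); split; first exact: sgen_mul.
  move=> j jI; rewrite tmulE fix1 //.
  case: (eqVneq j i) => [->|ji]; first by rewrite E1 E2.
  have jD : j \in I :\ i by rewrite !inE ji jI.
  by rewrite C1 // C2.
have case1 (I' : {set 'I_n}) (b' : 'I_n -> 'I_n) i0 :
    #|I'| = rank a -> {in I' &, injective b'} -> #|[set i in I' | b' i != i]| <= m.+1 ->
    i0 \in I' -> b' i0 \notin I' ->
    exists w, sgen a G w /\ forall i, i \in I' -> w i = b' i.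
  move=> cI' binj' dI' i0I bI.
  pose J := b' i0 |: (I' :\ i0).
  pose c z := if z == b' i0 then z else b' z.
  have bD : b' i0 \notin I' :\ i0 by rewrite !inE negb_and bI orbT.
  have cJ : #|J| = rank a by rewrite cardsU1 bD (cD _ _ cI' i0I) add1n prednK.
  have cinj : {in J &, injective c}.
    move=> z1 z2; rewrite /c !inE => /orP [/eqP->|/andP [z1i z1I]] /orP [/eqP->|/andP [z2i z2I]];
      rewrite ?eqxx //.
    - case: eqP => [->//|_] E; have := binj' _ _ i0I z2I E.
      by move=> E2; rewrite E2 eqxx in z2i.
    - case: eqP => [->//|_] E; have := binj' _ _ z1I i0I E.
      by move=> E2; rewrite E2 eqxx in z1i.
    - case: eqP => [E1|_]; first by rewrite -E1 z1I in bI.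
      case: eqP => [E2|_]; first by rewrite -E2 z2I in bI.
      exact: binj'.
  have dJ : #|[set i in J | c i != i]| <= m.
    have sub : [set i in J | c i != i] \subset [set i in I' | b' i != i] :\ i0.
      apply/subsetP => z; rewrite !inE /c => /andP [/orP [/eqP->|/andP [zi zI]]].
        by rewrite !eqxx.
      case: (eqVneq z (b' i0)) => [E|nb]; first by rewrite E !eqxx.
      by move=> ne; rewrite zi zI ne.
    apply: leq_trans (subset_leq_card sub) _.
    have i0in : i0 \in [set i in I' | b' i != i].
      rewrite inE i0I; apply/negP => /eqP E; by rewrite E i0I in bI.
    by move: dI'; rewrite (cardsD1 i0) i0in add1n ltnS.
  have [w' [Sw' Hw']] := IH J c cJ cinj dJ.
  have i0D : i0 \notin I' :\ i0 by rewrite !inE eqxx.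
  have ib : i0 != b' i0 by apply/negP => /eqP E; rewrite -E i0I in bI.
  have [m1 [S1 [C1 E1]]] := Move np kh lh (cD _ _ cI' i0I) i0D bD ib.
  exists (tmul m1 w'); split; first exact: sgen_mul.
  move=> j jI; rewrite tmulE.
  case: (eqVneq j i0) => [->|ji].
    by rewrite E1 Hw' ?inE ?eqxx // /c eqxx.
  have jD : j \in I' :\ i0 by rewrite !inE ji jI.
  rewrite C1 // Hw'; last by rewrite inE jD orbT.
  rewrite /c; case: eqP => // E; by rewrite -E jI in bI.
case: (boolP [exists i1 in I, b i1 \notin I]).
  case/existsP => i1 /andP [i1I bi1].
  exact: (case1 I b i1).
move=> Hall.
have bI i : i \in I -> b i \in I.
  move=> iI; apply/negPn/negP => bi; move/negP: Hall; apply.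
  by apply/existsP; exists i; rewrite iI.
case: (boolP [exists i0 in I, b i0 != i0]); last first.
  move=> Hfix; apply: (IH I b cI binj).
  suff -> : [set i in I | b i != i] = set0 by rewrite cards0.
  apply/setP => i; rewrite !inE; apply/negP => /andP [iI ne].
  by move/negP: Hfix; apply; apply/existsP; exists i; rewrite iI.
case/existsP => i0 /andP [i0I ne0].
have [z zI] := freept I cI.
pose b2 w := if w == i0 then z else b w.
have b2inj : {in I &, injective b2}.
  move=> z1 z2 z1I z2I; rewrite /b2.
  case: eqP => [->|_]; case: eqP => [->|_] //.
  - by move=> E; have := bI _ z2I; rewrite -E (negbTE zI).
  - by move=> E; have := bI _ z1I; rewrite E (negbTE zI).
  - exact: binj.
have d2 : #|[set i in I | b2 i != i]| <= m.+1.
  apply: leq_trans dI; apply: subset_leq_card; apply/subsetP => w.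
  rewrite !inE /b2 => /andP [wI]; case: (eqVneq w i0) => [->|ne1]; first by rewrite i0I ne0.
  by move=> ne; rewrite wI ne.
have b2i0 : b2 i0 \notin I by rewrite /b2 eqxx.
have [w2 [S2 H2]] := case1 I b2 i0 cI b2inj d2 i0I b2i0.
have bi0I := bI _ i0I.
have zD : z \notin I :\ b i0 by rewrite !inE negb_and zI orbT.
have bD : b i0 \notin I :\ b i0 by rewrite !inE eqxx.
have zb : z != b i0 by apply/negP => /eqP E; rewrite E bi0I in zI.
have [m2 [Sm2 [C2 E2]]] := Move np kh lh (cD _ _ cI bi0I) zD bD zb.
exists (tmul w2 m2); split; first exact: sgen_mul.
move=> j jI; rewrite tmulE H2 // /b2.
case: eqP => [->|ji]; first by rewrite E2.
rewrite C2 // !inE bI // andbT; apply/negP => /eqP E.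
by apply: ji; apply: binj.
Qed.
Lemma Key n (a : tmap n) (G : {group {perm 'I_n}}) :
  ~ in_perms [set: {perm 'I_n}] a ->
  k_homogeneous G (rank a) -> lambda_homogeneous G (kernel_type a) ->
  forall s t : {perm 'I_n}, sgen a G (tmul (tmul (perm_tmap s) a) (perm_tmap t)).
Proof.
move=> np kh lh s t.
have [g gG Hg] := lam_step lh s.
set IA := [set a x | x : 'I_n].
pose beta z := t (a (s (g^-1 (odflt z [pick w | a w == z]))))%g.
have betaE w : beta (a w) = t (a (s (g^-1 w)))%g.
  rewrite /beta; case: pickP => [w' /eqP E|no]; last by have := no w; rewrite eqxx.
  congr (t _); apply/eqP; rewrite -Hg !permKV E //.
have binj : {in IA &, injective beta}.
  move=> _ _ /imsetP [w1 _ ->] /imsetP [w2 _ ->]; rewrite !betaE => /perm_inj /eqP.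
  by rewrite -Hg !permKV => /eqP.
have [w [Sw Hw]] := @realize n a G np kh lh _ IA beta erefl binj (leqnn _).
have -> : tmul (tmul (perm_tmap s) a) (perm_tmap t) = tmul (tmul (perm_tmap g) a) w.
  apply/ffunP => u; rewrite !tmulE !perm_tmapE Hw ?imset_f // betaE permK //.
apply: sgen_mul => //; apply: sgen_mul; [exact: sgen_G|exact: sgen_a].
Qed.

Theorem theorem5p3 (n : nat) (a : tmap n) (G : {group {perm 'I_n}}) :
  ~ in_perms [set: {perm 'I_n}] a ->
  (Sn_pair a G <->
   k_homogeneous G (rank a) /\ lambda_homogeneous G (kernel_type a)).
Proof.
move=> np; split.
  by move=> sp; split; [apply: pair_kh|apply: pair_lh].
case=> kh lh f; split.
  case=> Sf nG; split; first by apply: sgen_mono Sf; apply: subsetT.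
  case: (sgen_struct Sf) => [//|[L _]].
  exact: left_not_perm np L.
case=> Sf nP; split; last first.
  by case=> g gG fg; apply: nP; exists g; rewrite ?inE.
pose good (h : tmap n) := forall p q : {perm 'I_n},
  sgen a G (tmul (tmul (perm_tmap p) h) (perm_tmap q)).
suff : in_perms [set: {perm 'I_n}] f \/ good f.
  case=> [//|Hg]; have := Hg 1%g 1%g.
  by rewrite perm_tmap1 perm_tmap1r.
elim: Sf {nP} => [|g _|f1 h _ IH1 _ IH2].
- by right; apply: Key.
- by left; exists g.
- case: IH1 => [[p _ ->]|G1]; case: IH2 => [[q _ ->]|G2].
  + by left; exists (p * q)%g; rewrite ?inE ?perm_tmapM.
  + right => p' q'.
    by rewrite tmulA perm_tmapM; apply: G2.
  + right => p' q'.
    by rewrite tmulA -tmulA perm_tmapM; apply: G1.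
  + right => p' q'.
    have -> : tmul (tmul (perm_tmap p') (tmul f1 h)) (perm_tmap q') =
      tmul (tmul (tmul (perm_tmap p') f1) (perm_tmap 1%g)) (tmul (tmul (perm_tmap 1%g) h) (perm_tmap q')).
      by rewrite perm_tmap1 perm_tmap1r !tmulA.
    exact: sgen_mul.
Qed.
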